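(* Let $(S_n)_{n\ge0}$ be defined by $S_0=3$, $S_1=1$, $S_2=3$ and $S_{n+1}=S_n+S_{n-1}+S_{n-2}$ for $n\ge 2$. Let $\alpha,\beta,\gamma$ be the roots of $x^3-x^2-x-1=0$ and $C_n=\alpha^n\beta^n+\alpha^n\gamma^n+\beta^n\gamma^n$ for $n\ge0$. Then for all integers $n,m\ge 0$: if $n\ge m$, $$S_nS_{n+m}=S_{2n+m}+S_mC_n-C_{n-m};$$ if $n<m$, $$S_nS_{n+m}=S_{2n+m}+S_mC_n-S_{m-n}.$$
   Context: $S_n$ is the generalized Lucas (generalized Tribonacci) sequence; it satisfies $S_n=\alpha^n+\beta^n+\gamma^n$. *)

(* Defs.v *)
From mathcomp Require Import all_boot all_order all_algebra all_field.
Set Implicit Arguments. Unset Strict Implicit. Unset Printing Implicit Defensive.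
Import GRing.Theory Num.Theory.
Local Open Scope ring_scope.

Fixpoint Sseq (n : nat) : int :=
  match n with
  | 0 => 3
  | 1 => 1
  | 2 => 3
  | (((k.+1) as k1).+1 as k2).+1 => Sseq k2 + Sseq k1 + Sseq k
  end.

Definition Cseq (a b c : algC) (n : nat) : algC :=
  a ^+ n * b ^+ n + a ^+ n * c ^+ n + b ^+ n * c ^+ n.

Lemma Sseq_test : [:: Sseq 0; Sseq 1; Sseq 2; Sseq 3; Sseq 4; Sseq 5] = [:: 3; 1; 3; 7; 11; 21].
Proof. by []. Qed.

(* Main.v *)
Require Import Defs.
From mathcomp Require Import all_boot all_order all_algebra all_field.
From mathcomp Require Import ring zify.
Import GRing.Theory Num.Theory.
Local Open Scope ring_scope.

Lemma ev (a b c x : algC)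
  (habc : ('X^3 - 'X^2 - 'X - 1 : {poly algC}) =
          ('X - a%:P) * ('X - b%:P) * ('X - c%:P)) :
  x ^+ 3 - x ^+ 2 - x - 1 = (x - a) * (x - b) * (x - c).
Proof. by have := congr1 (fun p => p.[x]) habc; rewrite /= !hornerE. Qed.

Lemma Srep {a b c : algC}
  (ha : a ^+ 3 = a ^+ 2 + a + 1) (hb : b ^+ 3 = b ^+ 2 + b + 1)
  (hc : c ^+ 3 = c ^+ 2 + c + 1)
  (e1 : a + b + c = 1) (e2 : a * b + a * c + b * c = -1) n :
  (Sseq n)%:~R = a ^+ n + b ^+ n + c ^+ n :> algC.
Proof.
suff H : forall n, [/\ (Sseq n)%:~R = a ^+ n + b ^+ n + c ^+ n :> algC,
   (Sseq n.+1)%:~R = a ^+ n.+1 + b ^+ n.+1 + c ^+ n.+1 :> algC &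
   (Sseq n.+2)%:~R = a ^+ n.+2 + b ^+ n.+2 + c ^+ n.+2 :> algC].
  by case: (H n).
elim=> [|k [H0 H1 H2]].
  have h3 : (3:int)%:~R = 3 :> algC by [].
  have h1 : (1:int)%:~R = 1 :> algC by [].
  split; rewrite /= ?expr0 ?expr1 ?h3 ?h1.
  - ring.
  - by rewrite e1.
  - have -> : a ^+ 2 + b ^+ 2 + c ^+ 2 = (a + b + c) ^+ 2 - 2 * (a * b + a * c + b * c) by ring.
    by rewrite e1 e2; ring.
split=> //.
have -> : Sseq k.+3 = Sseq k.+2 + Sseq k.+1 + Sseq k by [].
rewrite !rmorphD /= H0 H1 H2.
have E : forall x : algC, x ^+ 3 = x ^+ 2 + x + 1 -> x ^+ k.+3 = x ^+ k.+2 + x ^+ k.+1 + x ^+ k.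
  by move=> x hx; rewrite -addn3 exprD hx !exprS; ring.
by rewrite (E a ha) (E b hb) (E c hc); ring.
Qed.

Theorem mainTheorem3 (a b c : algC)
  (habc : ('X^3 - 'X^2 - 'X - 1 : {poly algC}) =
          ('X - a%:P) * ('X - b%:P) * ('X - c%:P)) (n m : nat) :
  ((m <= n)%N ->
     (Sseq n)%:~R * (Sseq (n + m))%:~R =
     (Sseq (2 * n + m))%:~R + (Sseq m)%:~R * Cseq a b c n - Cseq a b c (n - m)
       :> algC) /\
  ((n < m)%N ->
     (Sseq n)%:~R * (Sseq (n + m))%:~R =
     (Sseq (2 * n + m))%:~R + (Sseq m)%:~R * Cseq a b c n - (Sseq (m - n))%:~R
       :> algC).
Proof.
have ra : a ^+ 3 = a ^+ 2 + a + 1.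
  apply/eqP; rewrite -subr_eq0; apply/eqP; have h := ev a b c a habc.
  by transitivity ((a-a)*(a-b)*(a-c)); [rewrite -h; ring | ring].
have rb : b ^+ 3 = b ^+ 2 + b + 1.
  apply/eqP; rewrite -subr_eq0; apply/eqP; have h := ev a b c b habc.
  by transitivity ((b-a)*(b-b)*(b-c)); [rewrite -h; ring | ring].
have rc : c ^+ 3 = c ^+ 2 + c + 1.
  apply/eqP; rewrite -subr_eq0; apply/eqP; have h := ev a b c c habc.
  by transitivity ((c-a)*(c-b)*(c-c)); [rewrite -h; ring | ring].
have v0 := ev a b c 0 habc. have v1 := ev a b c 1 habc. have vm := ev a b c (-1) habc.
have e3 : a * b * c = 1.
  by move: v0; rewrite !expr0n /= !sub0r; move/eqP; rewrite -subr_eq0; move/eqP => h;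
   apply/eqP; rewrite -subr_eq0; apply/eqP; rewrite -h; ring.
have e1 : a + b + c = 1.
  move: v1 vm; rewrite !expr1n => h1 h2.
  have -> : a + b + c = - ((1 - a) * (1 - b) * (1 - c) + (-1 - a) * (-1 - b) * (-1 - c)) / 2 - a * b * c.
    by field.
  by rewrite -h1 -h2 e3; field.
have e2 : a * b + a * c + b * c = -1.
  move: v1 vm; rewrite !expr1n => h1 h2.
  have -> : a * b + a * c + b * c = ((1 - a) * (1 - b) * (1 - c) - (-1 - a) * (-1 - b) * (-1 - c)) / 2 - 1.
    by field.
  by rewrite -h1 -h2; field.
have S := Srep (a:=a) (b:=b) (c:=c) ra rb rc e1 e2.
rewrite /Cseq; split => hnm.
  have [k ->] : exists k, n = (k + m)%N by exists (n - m)%N; rewrite subnK.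
  rewrite addnK !S.
  have E : a ^+ m * b ^+ m * c ^+ m = 1 by rewrite -!exprMn e3 expr1n.
  rewrite -[X in _ - X]mulr1 -E.
  have -> : (2 * (k + m) + m = k + k + m + m + m)%N by lia.
  rewrite !exprD; ring.
have [k ->] : exists k, m = (n + k)%N by exists (m - n)%N; rewrite subnKC // ltnW.
rewrite addKn !S.
have E : a ^+ n * b ^+ n * c ^+ n = 1 by rewrite -!exprMn e3 expr1n.
rewrite -[X in _ - X]mulr1 -E.
have -> : (2 * n + (n + k) = n + n + n + k)%N by lia.
rewrite !exprD; ring.
Qed.
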